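(* Let $\mathcal{K}$ be a variety of languages such that every language in $\mathcal{K}$ has a syntactic algebra. A language $K$ belongs to $\mathcal{K}$ if, and only if, it is recognised by some algebra from the pseudo-variety $\mathcal{V}$ generated by the set $\mathcal{S}:=\{\mathrm{Syn}(K'):K'\in\mathcal{K}[\Sigma],\ \Sigma\text{ an alphabet}\}$.
   Context: Fix a set $\Xi$ of sorts; $\mathsf{Pos}^\Xi$: $\Xi$-sorted families of partial orders with sort-wise monotone maps. $\mathbb{M}$ is a monad on $\mathsf{Pos}^\Xi$ ($\mathrm{flat},\mathrm{sing}$) preserving injective, surjective, bijective functions and preimages and using the standard ordering (order on $\mathbb{M}A$ is $\{(\mathbb{M}p(u),\mathbb{M}q(u)):u\in\mathbb{M}R\}$, $R$ the order of $A$). $\mathbb{M}$-algebras $\langle A,\pi\rangle$: $\pi\circ\mathbb{M}\pi=\pi\circ\mathrm{flat}$, $\pi\circ\mathrm{sing}=\mathrm{id}$; morphisms commute with products. Finitary: sort-wise finite and finitely generated. Quotient of $\mathfrak{B}$: codomain of a surjective morphism from $\mathfrak{B}$. For $\Delta\subseteq\Xi$: $A|_\Delta$ the part with sorts in $\Delta$, $\mathbb{M}|_\Delta A:=(\mathbb{M}(A|_\Delta))|_\Delta$, $\mathfrak{A}|_\Delta$ the $\mathbb{M}|_\Delta$-algebra on $A|_\Delta$ with restricted product. $\mathfrak{B}$ is a sort-accumulation point of $\mathcal{A}$ if for every finite $\Delta\subseteq\Xi$ there is $\mathfrak{A}\in\mathcal{A}$ with $\mathfrak{B}|_\Delta$ a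 quotient of $\mathfrak{A}|_\Delta$. A pseudo-variety is a class of finitary algebras closed under quotients, finitary subalgebras of finite products and sort-accumulation points; the pseudo-variety generated by a set is the smallest pseudo-variety containing it. An alphabet is a finite unordered set $\Sigma$; a language is $K\subseteq\mathbb{M}_\xi\Sigma$; $\mathfrak{A}$ recognises $K$ if $K=\varphi^{-1}[P]$ for a morphism $\varphi:\mathbb{M}\Sigma\to\mathfrak{A}$ and upwards closed $P\subseteq A_\xi$. Contexts with hole of sort $\zeta$: $p\in\mathbb{M}(\Sigma+\{\Box\})$; $p[s]$ the image of $p$ under the algebra morphism extending $\Box\mapsto s$, $c\mapsto\mathrm{sing}(c)$; $p^{-1}[K]=\{s:p[s]\in K\}$. Syntactic congruence $s\preceq_K t$ ($s,t$ of sort $\zeta$) iff $p[s]\in K\Rightarrow p[t]\in K$ for all contexts $p\in\mathbb{M}_\xi(\Sigma+\{\Box\})$ with hole of sort $\zeta$. $K$ has a syntactic algebra if $\preceq_K$ is a congruence ordering (i.e. $\mathbb{M}q(s)\leq\mathbb{M}q(t)\Rightarrow\pi(s)\preceq_K\pi(t)$, $q$ the quotient map onto the ordered set of classes) with sort-wise finite quotient; $\mathrm{Syn}(K)$ is the quotient algebra $\mathbb{M}\Sigma/{\preceq_K}$ (product given by $\pi\circ\mathbb{M}q=q\circ\pi$). A variety of languages is a family $\mathcal{K}$ assigning to each alphabet $\Sigma$ a class $\mathcal{K}[\Sigma]$ of languages over $\Sigma$ closed under finite unions and intersections, inverse morphisms ($\psi^{-1}[K]$ for algebra morphisms $\psi:\mathbb{M}\Sigma\to\mathbb{M}\Gamma$)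 and derivatives $p^{-1}[K]$. *)

(* Defs.v *)
From Stdlib Require Import List ProofIrrelevance.
Import ListNotations.

Set Implicit Arguments.
Unset Strict Implicit.

Section Theory.
Variable Xi : Type.

Record SPos := {
  car :> Xi -> Type;
  le : forall x, car x -> car x -> Prop;
  le_refl : forall x (a : car x), le a a;
  le_trans : forall x (a b c : car x), le a b -> le b c -> le a c;
  le_antisym : forall x (a b : car x), le a b -> le b a -> a = b }.
Arguments le : clear implicits.
Arguments le_refl {s x} a.
Arguments le_trans {s x a b c}.
Arguments le_antisym {s x a b}.

Record Hom (A B : SPos) := {
  hfun :> forall x, A x -> B x;
  hmono : forall x a b, le A x a b -> le B x (hfun a) (hfun b) }.
Arguments hfun {A B} h x _.
Arguments hmono {A B} h {x a b}.

Definition injectiveH (A B : SPos) (f : Hom A B) : Prop :=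
  forall x a b, f x a = f x b -> a = b.
Definition surjectiveH (A B : SPos) (f : Hom A B) : Prop :=
  forall x b, exists a, f x a = b.
Definition bijectiveH (A B : SPos) (f : Hom A B) : Prop :=
  injectiveH f /\ surjectiveH f.

Definition sub (A : SPos) (P : forall x, A x -> Prop) : SPos.
Proof.
  refine {| car := fun x => {a : A x | P x a};
            le := fun x a b => le A x (proj1_sig a) (proj1_sig b) |}.
  - intros x a; apply le_refl.
  - intros x a b c; apply le_trans.
  - intros x [a pa] [b pb] H1 H2; simpl in *.
    pose proof (le_antisym H1 H2); subst; f_equal; apply proof_irrelevance.
Defined.
Arguments sub : clear implicits.

Definition incl {A : SPos} (P : forall x, A x -> Prop) : Hom (sub A P) A.
Proof.
  refine (@Build_Hom (sub A P) A (fun x (a : {a : A x | P x a}) => proj1_sig a) _).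
  intros x a b H; exact H.
Defined.

Definition prodP (A B : SPos) : SPos.
Proof.
  refine {| car := fun x => (A x * B x)%type;
            le := fun x p q => le A x (fst p) (fst q) /\ le B x (snd p) (snd q) |}.
  - intros x [a b]; split; apply le_refl.
  - intros x [a b] [c d] [e f] [H1 H2] [H3 H4]; split; eapply le_trans; eauto.
  - intros x [a b] [c d] [H1 H2] [H3 H4]; simpl in *.
    rewrite (le_antisym H1 H3), (le_antisym H2 H4); reflexivity.
Defined.

Definition ordrel (A : SPos) : SPos :=
  sub (prodP A A) (fun x p => le A x (fst p) (snd p)).

Definition ordp1 (A : SPos) : Hom (ordrel A) A.
Proof.
  refine (@Build_Hom (ordrel A) A (fun x (p : {p : (A x * A x)%type | le A x (fst p) (snd p)}) => fst (proj1_sig p)) _).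
  intros x a b [H _]; exact H.
Defined.

Definition ordp2 (A : SPos) : Hom (ordrel A) A.
Proof.
  refine (@Build_Hom (ordrel A) A (fun x (p : {p : (A x * A x)%type | le A x (fst p) (snd p)}) => snd (proj1_sig p)) _).
  intros x a b [_ H]; exact H.
Defined.

Definition preimP (A B : SPos) (f : Hom A B) (C : forall x, B x -> Prop) :
  forall x, A x -> Prop := fun x a => C x (f x a).

Record Monad := {
  Mo : SPos -> SPos;
  Mf : forall A B : SPos, Hom A B -> Hom (Mo A) (Mo B);
  sing : forall A : SPos, Hom A (Mo A);
  flat : forall A : SPos, Hom (Mo (Mo A)) (Mo A);
  Mf_ext : forall A B (f g : Hom A B), (forall x a, f x a = g x a) ->
           forall x u, Mf f x u = Mf g x u;
  Mf_id : forall (A : SPos) (f : Hom A A), (forall x a, f x a = a) ->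
           forall x u, Mf f x u = u;
  Mf_comp : forall A B C (f : Hom A B) (g : Hom B C) (h : Hom A C),
           (forall x a, h x a = g x (f x a)) ->
           forall x u, Mf h x u = Mf g x (Mf f x u);
  sing_nat : forall A B (f : Hom A B) x a, Mf f x (sing A x a) = sing B x (f x a);
  flat_nat : forall A B (f : Hom A B) x u,
           Mf f x (flat A x u) = flat B x (Mf (Mf f) x u);
  flat_sing : forall A x u, flat A x (sing (Mo A) x u) = u;
  flat_Msing : forall A x u, flat A x (Mf (sing A) x u) = u;
  flat_flat : forall A x u, flat A x (flat (Mo A) x u) = flat A x (Mf (flat A) x u);
  M_inj : forall A B (f : Hom A B), injectiveH f -> injectiveH (Mf f);
  M_surj : forall A B (f : Hom A B), surjectiveH f -> surjectiveH (Mf f);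
  M_bij : forall A B (f : Hom A B), bijectiveH f -> bijectiveH (Mf f);
  M_preim : forall A B (f : Hom A B) (C : forall x, B x -> Prop) x (u : Mo A x),
      (exists v : Mo (sub A (preimP f C)) x, Mf (incl (preimP f C)) x v = u) <->
      (exists w : Mo (sub B C) x, Mf (incl C) x w = Mf f x u);
  M_order : forall (A : SPos) x (a b : Mo A x),
      le (Mo A) x a b <->
      exists u : Mo (ordrel A) x, Mf (ordp1 A) x u = a /\ Mf (ordp2 A) x u = b }.

Variable M : Monad.

Record Alg := {
  acar : SPos;
  act : Hom (Mo M acar) acar;
  act_flat : forall x u, act x (Mf M act x u) = act x (flat M acar x u);
  act_sing : forall x a, act x (sing M acar x a) = a }.

Definition is_morph (A B : SPos) (piA : Hom (Mo M A) A) (piB : Hom (Mo M B) B)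
  (f : Hom A B) : Prop :=
  forall x u, f x (piA x u) = piB x (Mf M f x u).

Definition morph (A B : Alg) (f : Hom (acar A) (acar B)) : Prop :=
  is_morph (act A) (act B) f.

Definition sortwise_finite (A : SPos) : Prop :=
  forall x, exists l : list (A x), forall a, In a l.

Definition gen_pred (A : SPos) (l : list {x : Xi & A x}) : forall x, A x -> Prop :=
  fun x a => In (existT _ x a) l.

Definition finitely_generated (A : Alg) : Prop :=
  exists l : list {x : Xi & acar A x},
    forall x a, exists u : Mo M (sub (acar A) (gen_pred l)) x,
      act A x (Mf M (incl (gen_pred l)) x u) = a.

Definition finitary (A : Alg) : Prop :=
  sortwise_finite (acar A) /\ finitely_generated A.

Definition is_quotient (B A : Alg) : Prop :=
  exists f : Hom (acar A) (acar B), morph f /\ surjectiveH f.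

(** restriction to a set of sorts Delta: the part A|_Delta, viewed inside Pos^Xi
    as the sub-poset with empty components outside Delta *)
Definition inD (Delta : list Xi) (A : SPos) : forall x, A x -> Prop :=
  fun x _ => In x Delta.

Definition liftD (Delta : list Xi) (A B : SPos)
  (phi : forall x, In x Delta -> A x -> B x)
  (mono : forall x (h : In x Delta) a b, le A x a b -> le B x (phi x h a) (phi x h b)) :
  Hom (sub A (inD Delta (A:=A))) (sub B (inD Delta (A:=B))).
Proof.
  refine (@Build_Hom (sub A (inD Delta (A:=A))) (sub B (inD Delta (A:=B)))
    (fun x (a : {a : A x | In x Delta}) =>
       (exist (fun _ : B x => In x Delta) (phi x (proj2_sig a) (proj1_sig a)) (proj2_sig a))) _).
  intros x [a ha] [b hb] H; simpl in *.
  rewrite (proof_irrelevance _ hb ha); apply mono; exact H.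
Defined.

(** B|_Delta is a quotient of A|_Delta as M|_Delta-algebras (with restricted products) *)
Definition restr_quotient (Delta : list Xi) (B A : Alg) : Prop :=
  exists (phi : forall x, In x Delta -> acar A x -> acar B x)
         (mono : forall x (h : In x Delta) a b,
                 le (acar A) x a b -> le (acar B) x (phi x h a) (phi x h b)),
    (forall x (h : In x Delta) b, exists a, phi x h a = b) /\
    (forall x (h : In x Delta) (u : Mo M (sub (acar A) (inD Delta (A:=acar A))) x),
        phi x h (act A x (Mf M (incl (inD Delta (A:=acar A))) x u)) =
        act B x (Mf M (incl (inD Delta (A:=acar B))) x (Mf M (liftD mono) x u))).

Definition sort_accumulation_point (C : Alg -> Prop) (B : Alg) : Prop :=
  forall Delta : list Xi, exists A, C A /\ restr_quotient Delta B A.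

(** B is (isomorphic to) a subalgebra of the finite product of the family F:
    there are morphisms B -> F i which jointly form an order-embedding into the
    product (the canonical map into the product is injective and reflects order) *)
Definition sub_of_finite_product (I : Type) (F : I -> Alg) (B : Alg) : Prop :=
  exists h : forall i, Hom (acar B) (acar (F i)),
    (forall i, morph (h i)) /\
    (forall x a b, (forall i, le (acar (F i)) x (h i x a) (h i x b)) ->
                   le (acar B) x a b).

Definition pseudo_variety (C : Alg -> Prop) : Prop :=
  (forall A, C A -> finitary A) /\
  (forall A B, C A -> finitary B -> is_quotient B A -> C B) /\
  (forall (I : Type) (l : list I) (F : I -> Alg) (B : Alg),
      (forall i, In i l) -> (forall i, C (F i)) -> finitary B ->
      sub_of_finite_product F B -> C B) /\
  (forall B, finitary B -> sort_accumulation_point C B -> C B).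

Definition in_generated_pv (S : Alg -> Prop) (A : Alg) : Prop :=
  forall C, pseudo_variety C -> (forall B, S B -> C B) -> C A.

Record Alphabet := {
  alet :> Xi -> Type;
  afin : exists l : list {x : Xi & alet x}, forall a, In a l }.

Definition disc (T : Xi -> Type) : SPos.
Proof.
  refine {| car := T; le := fun x a b => a = b |}.
  - reflexivity.
  - intros; subst; reflexivity.
  - intros; assumption.
Defined.

Definition free (S : Alphabet) : SPos := Mo M (disc S).

Definition lang (S : Alphabet) : Type := {xi : Xi & free S xi -> Prop}.

Definition free_morph (S T : Alphabet) (psi : Hom (free S) (free T)) : Prop :=
  is_morph (flat M (disc S)) (flat M (disc T)) psi.

Definition recognises (A : Alg) (S : Alphabet) (K : lang S) : Prop :=
  exists phi : Hom (free S) (acar A),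
    is_morph (flat M (disc S)) (act A) phi /\
    exists P : acar A (projT1 K) -> Prop,
      (forall a b, le (acar A) _ a b -> P a -> P b) /\
      (forall s, projT2 K s <-> P (phi _ s)).

(** contexts: S + {box}, box of sort zeta *)
Definition SBox (S : Alphabet) (zeta : Xi) : SPos :=
  disc (fun x => (S x + (x = zeta))%type).

Definition plugH (S : Alphabet) (zeta : Xi) (s : free S zeta) : Hom (SBox S zeta) (free S).
Proof.
  refine (@Build_Hom (SBox S zeta) (free S) (fun x (c : (S x + (x = zeta))%type) =>
     match c with
     | inl a => sing M (disc S) x a
     | inr e => match eq_sym e in _ = y return free S y with eq_refl => s end
     end) _).
  intros x a b H; simpl in H; subst; apply le_refl.
Defined.

Definition plug (S : Alphabet) (zeta xi : Xi) (p : Mo M (SBox S zeta) xi) (s : free S zeta)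
  : free S xi :=
  flat M (disc S) xi (Mf M (plugH s) xi p).

Definition synle (S : Alphabet) (K : lang S) (zeta : Xi) (s t : free S zeta) : Prop :=
  forall p : Mo M (SBox S zeta) (projT1 K), projT2 K (plug p s) -> projT2 K (plug p t).

(** K has a syntactic algebra: <=_K is a congruence ordering with sort-wise finite
    quotient.  The quotient (ordered set of classes) is given up to isomorphism by a
    surjective monotone q : M S -> Q with q s <= q t <-> s <=_K t. *)
Definition has_syntactic_algebra (S : Alphabet) (K : lang S) : Prop :=
  exists (Q : SPos) (q : Hom (free S) Q),
    surjectiveH q /\
    (forall x s t, le Q x (q x s) (q x t) <-> synle K s t) /\
    sortwise_finite Q /\
    (forall x (s t : Mo M (free S) x),
        le (Mo M Q) x (Mf M q x s) (Mf M q x t) ->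
        synle K (flat M (disc S) x s) (flat M (disc S) x t)).

Definition is_syntactic_algebra (S : Alphabet) (K : lang S) (A : Alg) : Prop :=
  exists q : Hom (free S) (acar A),
    is_morph (flat M (disc S)) (act A) q /\ surjectiveH q /\
    (forall x s t, le (acar A) x (q x s) (q x t) <-> synle K s t).

Definition lang_variety (KK : forall S : Alphabet, lang S -> Prop) : Prop :=
  (forall S xi, KK S (existT _ xi (fun _ => False))) /\
  (forall S xi, KK S (existT _ xi (fun _ => True))) /\
  (forall S xi (K1 K2 : free S xi -> Prop),
      KK S (existT _ xi K1) -> KK S (existT _ xi K2) ->
      KK S (existT _ xi (fun s => K1 s \/ K2 s))) /\
  (forall S xi (K1 K2 : free S xi -> Prop),
      KK S (existT _ xi K1) -> KK S (existT _ xi K2) ->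
      KK S (existT _ xi (fun s => K1 s /\ K2 s))) /\
  (forall S T (psi : Hom (free S) (free T)), free_morph psi ->
      forall xi (K : free T xi -> Prop), KK T (existT _ xi K) ->
      KK S (existT _ xi (fun s => K (psi xi s)))) /\
  (forall S xi zeta (K : free S xi -> Prop) (p : Mo M (SBox S zeta) xi),
      KK S (existT _ xi K) ->
      KK S (existT _ zeta (fun s => K (plug p s)))).

End Theory.

(* Main.v *)
Require Import Defs.
From Stdlib Require Import List Classical ClassicalEpsilon FunctionalExtensionality PropExtensionality ProofIrrelevance.
Import ListNotations.

Section Main.
Variable Xi : Type.
Variable M : Monad Xi.

Definition compH {A B C : SPos Xi} (f : Hom A B) (g : Hom B C) : Hom A C :=
  @Build_Hom Xi A C (fun x a => g x (f x a))
    (fun x a b H => hmono g (hmono f H)).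

Definition discH {T : Xi -> Type} {B : SPos Xi} (f : forall x, T x -> B x) : Hom (disc T) B.
Proof.
  refine (@Build_Hom Xi (disc T) B f _).
  intros x a b H; simpl in H; subst; apply le_refl.
Defined.

Lemma Mf_compH {A B C : SPos Xi} (f : Hom A B) (g : Hom B C) x u :
  Mf M (compH f g) x u = Mf M g x (Mf M f x u).
Proof. apply Mf_comp; reflexivity. Qed.

Lemma free_ext (S : Alphabet Xi) (A : Alg M) (phi : Hom (free M S) (acar A)) :
  is_morph (flat M (disc S)) (act A) phi ->
  forall x u, phi x u = act A x (Mf M (compH (sing M (disc S)) phi) x u).
Proof.
  intros Hm x u.
  rewrite <- (flat_Msing (m:=M) (A:=disc S) u) at 1.
  rewrite Hm, Mf_compH; reflexivity.
Qed.

Definition extH (S : Alphabet Xi) (A : Alg M) (G : Hom (disc S) (acar A)) :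
  Hom (free M S) (acar A) := compH (Mf M G) (act A).

Lemma extH_morph (S : Alphabet Xi) (A : Alg M) (G : Hom (disc S) (acar A)) : is_morph (flat M (disc S)) (act A) (extH S A G).
Proof.
  intros x U; unfold extH; simpl.
  rewrite flat_nat, <- act_flat, Mf_compH; reflexivity.
Qed.

Lemma morph_comp {A B C : SPos Xi} (pA : Hom (Mo M A) A) (pB : Hom (Mo M B) B)
  (pC : Hom (Mo M C) C) (f : Hom A B) (g : Hom B C) :
  is_morph pA pB f -> is_morph pB pC g -> is_morph pA pC (compH f g).
Proof.
  intros Hf Hg x u; simpl. rewrite Hf, Hg, Mf_compH; reflexivity.
Qed.

Definition freeAlg (S : Alphabet Xi) : Alg M :=
  @Build_Alg Xi M (free M S) (flat M (disc S))
    (fun x u => eq_sym (flat_flat (m:=M) (A:=disc S) u))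
    (fun x a => flat_sing (m:=M) (A:=disc S) a).

Lemma lift_lemma (S : Alphabet Xi) (A B : Alg M) (phi : Hom (free M S) (acar B))
  (f : Hom (acar A) (acar B)) :
  is_morph (flat M (disc S)) (act B) phi -> morph f -> surjectiveH f ->
  exists phi' : Hom (free M S) (acar A),
    is_morph (flat M (disc S)) (act A) phi' /\ forall x u, f x (phi' x u) = phi x u.
Proof.
  intros Hphi Hf Hs.
  set (G := @discH S (acar A)
     (fun x a => proj1_sig (constructive_indefinite_description _
                   (Hs x (phi x (sing M (disc S) x a)))))).
  exists (extH S A G); split; [apply extH_morph|].
  intros x u; unfold extH; simpl.
  rewrite Hf, <- Mf_compH, (@free_ext S B phi Hphi).
  apply f_equal, Mf_ext.
  intros y a; simpl.
  exact (proj2_sig (constructive_indefinite_description _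
                   (Hs y (phi y (sing M (disc S) y a))))).
Qed.

Variable KK : forall S : Alphabet Xi, lang M S -> Prop.
Hypothesis HV : lang_variety KK.

Lemma KK_ext (S : Alphabet Xi) xi (K1 K2 : free M S xi -> Prop) :
  KK S (existT _ xi K1) -> (forall s, K1 s <-> K2 s) -> KK S (existT _ xi K2).
Proof.
  intros H E.
  assert (K1 = K2) as <- by (apply functional_extensionality; intro s; apply propositional_extensionality, E).
  exact H.
Qed.
Arguments KK_ext {S xi K1 K2}.

Lemma union_lemma (S : Alphabet Xi) xi (B : SPos Xi) (f : free M S xi -> B xi)
  (lb : list (B xi)) (Hl : forall b, In b lb) (P : B xi -> Prop)
  (Pup : forall a b, le a b -> P a -> P b)
  (Hup : forall b, KK S (existT _ xi (fun s => le b (f s)))) :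
  KK S (existT _ xi (fun s => P (f s))).
Proof.
  destruct HV as [H0 [H1 [HU [HI [Hinv Hder]]]]].
  assert (forall l, exists L, KK S (existT _ xi L) /\
            forall s, L s <-> exists b, In b l /\ P b /\ le b (f s)) as Hl'.
  { induction l as [|a l IH].
    - exists (fun _ => False); split; [apply H0|]. intro s; split; [tauto|].
      intros [b [[] _]].
    - destruct IH as [L [HL HLe]].
      destruct (classic (P a)) as [Pa|nPa].
      + exists (fun s => L s \/ le a (f s)); split; [apply HU; auto|].
        intro s; rewrite HLe; split.
        * intros [[b [Hb1 Hb2]]|Ha]; [exists b; simpl; auto|exists a; simpl; auto].
        * intros [b [[<-|Hb] [Hb2 Hb3]]]; [right; auto|left; exists b; auto].
      + exists L; split; auto. intro s; rewrite HLe; split.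
        * intros [b [Hb1 Hb2]]; exists b; simpl; auto.
        * intros [b [[<-|Hb] [Hb2 Hb3]]]; [contradiction|exists b; auto]. }
  destruct (Hl' lb) as [L [HL HLe]].
  apply (KK_ext HL). intro s; rewrite HLe; split.
  - intros [b [_ [Pb Hb]]]; eauto.
  - intro Ps; exists (f s); split; [auto|split; auto; apply le_refl].
Qed.

Lemma inter_lemma (S : Alphabet Xi) xi (I : Type) (F : I -> free M S xi -> Prop)
  (HF : forall i, KK S (existT _ xi (F i))) (l : list I) :
  exists L, KK S (existT _ xi L) /\ forall s, L s <-> forall i, In i l -> F i s.
Proof.
  destruct HV as [H0 [H1 [HU [HI [Hinv Hder]]]]].
  induction l as [|a l IH].
  - exists (fun _ => True); split; [apply H1|]. intro s; split; auto. intros _ i [].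
  - destruct IH as [L [HL HLe]].
    exists (fun s => L s /\ F a s); split; [apply HI; auto|].
    intro s; rewrite HLe; split.
    + intros [H2 H3] i [<-|Hi]; auto; apply H2; auto.
    + intros H2; split; [intros i Hi|]; apply H2; simpl; auto.
Qed.

Lemma plug_box (S : Alphabet Xi) xi (s : free M S xi) :
  plug (sing M (SBox S xi) xi (inr eq_refl)) s = s.
Proof.
  unfold plug. rewrite sing_nat. simpl. apply flat_sing.
Qed.
Arguments plug_box {S xi}.

Lemma syn_up (S' : Alphabet Xi) xi' (L' : free M S' xi' -> Prop)
  (HK : KK S' (existT _ xi' L')) (B : Alg M) (qB : Hom (free M S') (acar B))
  (qs : surjectiveH qB)
  (qiff : forall x s t, le (qB x s) (qB x t) <-> synle (existT _ xi' L') s t)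
  xi (lb : list (acar B xi)) (Hl : forall b, In b lb) (t0 : free M S' xi) :
  KK S' (existT _ xi (fun t => le (qB xi t0) (qB xi t))).
Proof.
  destruct HV as [H0 [H1 [HU [HI [Hinv Hder]]]]].
  assert (forall l, exists L, KK S' (existT _ xi L) /\
     (forall t, synle (existT _ xi' L') t0 t -> L t) /\
     (forall c, In c l -> ~ le (qB xi t0) c -> forall t, qB xi t = c -> ~ L t)) as Hl'.
  { induction l as [|c l IH].
    - exists (fun _ => True); split; [apply H1|]. split; [auto|intros c []].
    - destruct IH as [L [HL [HL1 HL2]]].
      destruct (classic (le (qB xi t0) c)) as [Hc|Hc].
      + exists L; split; [auto|split; [auto|]].
        intros c' [<-|Hc'] Hn; [contradiction|intros; eapply HL2; eauto].
      + destruct (qs xi c) as [t1 Ht1].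
        assert (~ synle (existT _ xi' L') t0 t1) as Hns by (rewrite <- qiff, Ht1; auto).
        unfold synle in Hns; simpl in Hns.
        apply not_all_ex_not in Hns; destruct Hns as [p Hp].
        apply imply_to_and in Hp; destruct Hp as [Hp1 Hp2].
        exists (fun t => L t /\ L' (plug p t)); split.
        { apply HI; [auto|apply (Hder S' xi' xi L' p HK)]. }
        split.
        * intros t Ht; split; auto. apply Ht; auto.
        * intros c' [<-|Hc'] Hn t Ht [Ha Hb].
          -- assert (synle (existT _ xi' L') t t1) as Hs.
             { rewrite <- qiff, Ht, Ht1; apply le_refl. }
             apply Hp2, Hs, Hb.
          -- eapply HL2; eauto. }
  destruct (Hl' lb) as [L [HL [HL1 HL2]]].
  apply (KK_ext HL). intro t; split.
  - intro HLt. destruct (classic (le (qB xi t0) (qB xi t))) as [H|H]; auto.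
    exfalso; eapply HL2; eauto.
  - intro H; apply HL1; rewrite <- qiff; auto.
Qed.

Lemma syn_exists (S : Alphabet Xi) (K : lang M S) :
  has_syntactic_algebra K -> exists A : Alg M, is_syntactic_algebra K A /\ recognises A K.
Proof.
  intros [Q [q [qs [qiff [qfin qcong]]]]].
  pose proof (M_surj (m:=M) qs) as Ms.
  set (a0 := fun x (u : Mo M Q x) =>
        q x (flat M (disc S) x (proj1_sig (constructive_indefinite_description _ (Ms x u))))).
  assert (wd : forall x (v : Mo M (free M S) x), a0 x (Mf M q x v) = q x (flat M (disc S) x v)).
  { intros x v. unfold a0.
    destruct (constructive_indefinite_description _ (Ms x (Mf M q x v))) as [v' Hv']; simpl.
    apply le_antisym; apply qiff, qcong; rewrite Hv'; apply le_refl. }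
  assert (mono : forall x u u', le u u' -> le (a0 x u) (a0 x u')).
  { intros x u u' H. unfold a0.
    destruct (constructive_indefinite_description _ (Ms x u)) as [v Hv]; simpl.
    destruct (constructive_indefinite_description _ (Ms x u')) as [v' Hv']; simpl.
    apply qiff, qcong. rewrite Hv, Hv'; exact H. }
  set (actH := @Build_Hom Xi (Mo M Q) Q a0 mono).
  assert (Hsing : forall x a, actH x (sing M Q x a) = a).
  { intros x a; simpl. destruct (qs x a) as [s <-].
    rewrite <- sing_nat, wd. f_equal. apply flat_sing. }
  assert (Hflat : forall x u, actH x (Mf M actH x u) = actH x (flat M Q x u)).
  { intros x U.
    destruct (M_surj (m:=M) Ms U) as [V <-].
    rewrite <- Mf_compH.
    rewrite (@Mf_ext Xi M _ _ (compH (Mf M q) actH) (compH (flat M (disc S)) q)).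
    2:{ intros y a; simpl; apply wd. }
    rewrite Mf_compH. simpl. rewrite wd.
    rewrite <- flat_nat, wd. f_equal. symmetry; apply flat_flat. }
  set (A := @Build_Alg Xi M Q actH Hflat Hsing).
  exists A.
  assert (Hmq : is_morph (flat M (disc S)) (act A) q).
  { intros x u; simpl; symmetry; apply wd. }
  split.
  - exists q; split; [exact Hmq|split; auto].
  - destruct K as [xi L].
    exists q; split; [exact Hmq|].
    exists (fun c => exists s, q xi s = c /\ L s); split.
    + intros a b Hab [s [<- Hs]].
      destruct (qs xi b) as [t <-].
      exists t; split; auto.
      apply qiff in Hab. rewrite <- (plug_box t). apply Hab. rewrite plug_box; exact Hs.
    + intro s; split.
      * intro Hs; exists s; auto.
      * intros [s' [E Hs']].
        assert (synle (existT _ xi L) s' s) as Hsy by (apply qiff; rewrite E; apply le_refl).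
        rewrite <- (plug_box s). apply Hsy. rewrite plug_box; exact Hs'.
Qed.

Definition Cls (A : Alg M) : Prop :=
  finitary A /\ forall S (K : lang M S), recognises A K -> KK S K.

Lemma syn_in_Cls (S' : Alphabet Xi) (K' : lang M S') (B : Alg M) :
  KK S' K' -> has_syntactic_algebra K' -> is_syntactic_algebra K' B -> Cls B.
Proof.
  intros HK [Q [q [qs [qiff [qfin qcong]]]]] [qB [qBm [qBs qBiff]]].
  assert (finB : sortwise_finite (acar B)).
  { intro x. destruct (qfin x) as [lq Hlq].
    set (sec := fun c => proj1_sig (constructive_indefinite_description _ (qs x c))).
    exists (map (fun c => qB x (sec c)) lq).
    intro b. destruct (qBs x b) as [s <-].
    apply in_map_iff. exists (q x s); split; auto.
    unfold sec. destruct (constructive_indefinite_description _ (qs x (q x s))) as [s' Hs']; simpl.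
    apply le_antisym; apply qBiff, qiff; rewrite Hs'; apply le_refl. }
  split; [split|].
  - exact finB.
  - destruct (afin S') as [ls Hls].
    set (f := fun (p : {x : Xi & S' x}) =>
                existT (fun x => acar B x) (projT1 p) (qB (projT1 p) (sing M (disc S') (projT1 p) (projT2 p)))).
    exists (map f ls).
    assert (Hin : forall x (a : S' x), gen_pred (map f ls) (qB x (sing M (disc S') x a))).
    { intros x a. unfold gen_pred. apply in_map_iff. exists (existT _ x a); split; auto. }
    set (g := @discH S' (sub (gen_pred (map f ls)))
                (fun x a => exist _ (qB x (sing M (disc S') x a)) (Hin x a))).
    intros x b. destruct (qBs x b) as [s <-].
    exists (Mf M g x s).
    rewrite <- Mf_compH. rewrite (@free_ext S' B qB qBm).
    f_equal. apply Mf_ext. intros y a; reflexivity.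
  - intros S [xi K] [phi [phim [P [Pup HP]]]].
    destruct (@lift_lemma S (freeAlg S') B phi qB phim qBm qBs) as [phi' [phi'm Hphi']].
    destruct K' as [xi' L'].
    destruct HV as [H0 [H1 [HU [HI [Hinv Hder]]]]].
    assert (KK S' (existT _ xi (fun t => P (qB xi t)))) as HP'.
    { destruct (finB xi) as [lb Hlb].
      apply (@union_lemma S' xi (acar B) (qB xi) lb Hlb P Pup).
      intro b. destruct (qBs xi b) as [t0 <-].
      eapply syn_up; eauto. }
    apply (Hinv S S' phi' phi'm xi _) in HP'.
    apply (KK_ext HP'). intro s; simpl. rewrite Hphi', HP; tauto.
Qed.

Lemma Cls_pv : pseudo_variety Cls.
Proof.
  split; [|split; [|split]].
  - intros A [H _]; exact H.
  - intros A B [finA HA] finB [f [fm fs]]. split; auto.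
    intros S [xi K] [phi [phim [P [Pup HP]]]].
    destruct (@lift_lemma S A B phi f phim fm fs) as [phi' [phi'm Hphi']].
    apply HA. exists phi'; split; auto.
    exists (fun a => P (f xi a)); split.
    + intros a b Hab; apply Pup, (hmono f Hab).
    + intro s; rewrite HP, Hphi'; tauto.
  - intros I l F B Hl HF finB [h [hm hemb]]. split; auto.
    intros S [xi K] [phi [phim [P [Pup HP]]]].
    destruct (proj1 finB xi) as [lb Hlb].
    assert (KK S (existT _ xi (fun s => P (phi xi s)))) as HK.
    { apply (@union_lemma S xi (acar B) (phi xi) lb Hlb P Pup).
      intro b.
      destruct (@inter_lemma S xi I
                 (fun i s => le (h i xi b) (h i xi (phi xi s)))) with (l := l) as [L [HL HLe]].
      { intro i. apply (proj2 (HF i)). exists (compH phi (h i)); split.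
        - apply (@morph_comp _ _ _ _ (act B)); auto. apply hm.
        - exists (fun c => le (h i xi b) c); split.
          + intros a c H1 H2; eapply le_trans; eauto.
          + intro s; simpl; tauto. }
      apply (KK_ext HL). intro s; rewrite HLe; split.
      - intro H; apply hemb; intro i; apply H; auto.
      - intros H i _; apply (hmono (h i) H). }
    apply (KK_ext HK). intro s; simpl; rewrite HP; tauto.
  - intros B finB Hacc. split; auto.
    intros S [xi K] [phi [phim [P [Pup HP]]]].
    destruct (afin S) as [ls Hls].
    set (Delta := xi :: map (@projT1 _ _) ls).
    assert (inDl : forall x (a : S x), In x Delta).
    { intros x a; right; apply in_map_iff; exists (existT _ x a); auto. }
    destruct (Hacc Delta) as [A [[finA HA] [p [mono [ps pm]]]]].
    set (g := @discH S (sub (inD Delta (A:=acar A)))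
         (fun x a => exist _ (proj1_sig (constructive_indefinite_description _
                      (ps x (inDl x a) (phi x (sing M (disc S) x a))))) (inDl x a))).
    set (phi' := extH S A (compH g (Defs.incl _))).
    assert (Hc : forall x (hx : In x Delta) u, p x hx (phi' x u) = phi x u).
    { intros x hx u. unfold phi', extH; simpl.
      rewrite Mf_compH, pm, <- !Mf_compH, (@free_ext S B phi phim).
      f_equal. apply Mf_ext. intros y a; simpl.
      exact (proj2_sig (constructive_indefinite_description _
                      (ps y (inDl y a) (phi y (sing M (disc S) y a))))). }
    apply HA. exists phi'; split; [apply extH_morph|].
    assert (hxi : In xi Delta) by (left; reflexivity).
    exists (fun a => P (p xi hxi a)); split.
    + intros a b Hab; apply Pup, mono, Hab.
    + intro s; rewrite HP, Hc; tauto.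
Qed.

End Main.

Theorem theorem5p9 (Xi : Type) (M : Monad Xi)
  (KK : forall S : Alphabet Xi, lang M S -> Prop) :
  lang_variety KK ->
  (forall (S : Alphabet Xi) (K : lang M S), KK S K -> has_syntactic_algebra K) ->
  forall (S : Alphabet Xi) (K : lang M S),
    KK S K <->
    exists A : Alg M,
      in_generated_pv
        (fun B => exists (S' : Alphabet Xi) (K' : lang M S'), KK S' K' /\ is_syntactic_algebra K' B)
        A /\
      recognises A K.
Proof.
  intros HV Hsyn S K; split.
  - intro HK. destruct (@syn_exists Xi M S K (Hsyn S K HK)) as [A [HA HR]].
    exists A; split; auto.
    intros C _ HC; apply HC; exists S, K; auto.
  - intros [A [HA HR]].
    assert (@Cls Xi M KK A) as [_ H].
    { apply HA; [apply (@Cls_pv Xi M KK HV)|].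
      intros B [S' [K' [HK' HB]]]. eapply (@syn_in_Cls Xi M KK HV); eauto. }
    apply H; auto.
Qed.
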